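(* Let $R$ be an NJ-symmetric ring. If every maximal essential left ideal of $R$ is a two-sided ideal (i.e. $R$ is MELT), then $R$ is left quasi-duo; and (right-hand version) if every maximal essential right ideal of $R$ is a two-sided ideal, then $R$ is right quasi-duo.
   Context: Rings are associative with identity. $N(R)$ is the set of nilpotent elements, $J(R)$ the Jacobson radical. $R$ is NJ-symmetric if for all $a,b,c\in R$, $abc\in N(R)$ implies $bac\in J(R)$. $R$ is left (right) quasi-duo if every maximal left (right) ideal is a two-sided ideal. *)

(* Defs.v *)
From mathcomp Require Import all_boot all_algebra.
Set Implicit Arguments. Unset Strict Implicit. Unset Printing Implicit Defensive.
Import GRing.Theory.
Local Open Scope ring_scope.

Section RingNotions.
Variable R : pzRingType.

Definition nilpotent_elt (x : R) : Prop := exists n : nat, x ^+ n = 0.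

Definition is_left_ideal (I : R -> Prop) : Prop :=
  [/\ I 0, (forall x y, I x -> I y -> I (x + y)) & (forall r x, I x -> I (r * x))].

Definition is_right_ideal (I : R -> Prop) : Prop :=
  [/\ I 0, (forall x y, I x -> I y -> I (x + y)) & (forall r x, I x -> I (x * r))].

Definition is_two_sided_ideal (I : R -> Prop) : Prop :=
  is_left_ideal I /\ is_right_ideal I.

Definition is_maximal_left_ideal (M : R -> Prop) : Prop :=
  [/\ is_left_ideal M, (exists x, ~ M x) &
      (forall I, is_left_ideal I -> (forall x, M x -> I x) ->
         (forall x, I x -> M x) \/ (forall x, I x))].

Definition is_maximal_right_ideal (M : R -> Prop) : Prop :=
  [/\ is_right_ideal M, (exists x, ~ M x) &
      (forall I, is_right_ideal I -> (forall x, M x -> I x) ->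
         (forall x, I x -> M x) \/ (forall x, I x))].

Definition is_essential_left_ideal (L : R -> Prop) : Prop :=
  is_left_ideal L /\
  forall I, is_left_ideal I -> (exists x, I x /\ x <> 0) ->
    exists x, I x /\ L x /\ x <> 0.

Definition is_essential_right_ideal (L : R -> Prop) : Prop :=
  is_right_ideal L /\
  forall I, is_right_ideal I -> (exists x, I x /\ x <> 0) ->
    exists x, I x /\ L x /\ x <> 0.

Definition jacobson (x : R) : Prop :=
  forall M, is_maximal_left_ideal M -> M x.

Definition NJ_symmetric : Prop :=
  forall a b c : R, nilpotent_elt (a * b * c) -> jacobson (b * a * c).

Definition MELT : Prop :=
  forall M, is_maximal_left_ideal M -> is_essential_left_ideal M ->
    is_two_sided_ideal M.

Definition MERT : Prop :=
  forall M, is_maximal_right_ideal M -> is_essential_right_ideal M ->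
    is_two_sided_ideal M.

Definition left_quasi_duo : Prop :=
  forall M, is_maximal_left_ideal M -> is_two_sided_ideal M.

Definition right_quasi_duo : Prop :=
  forall M, is_maximal_right_ideal M -> is_two_sided_ideal M.

End RingNotions.

(* Main.v *)
Require Import Defs.
From mathcomp Require Import all_boot all_algebra.
From mathcomp Require Import boolp classical_sets.
From Stdlib Require Import Classical.
Set Implicit Arguments. Unset Strict Implicit. Unset Printing Implicit Defensive.
Import GRing.Theory.
Local Open Scope ring_scope.

Section S.
Variable R : pzRingType.

Lemma max_left_exists (u : R) : ~ (exists w, w * u = 1) ->
  exists L, is_maximal_left_ideal L /\ L u.
Proof.
move=> Hu.
pose P (B : R -> Prop) := is_left_ideal B /\ B u /\ ~ B 1.
pose T := {B : R -> Prop | P B}.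
have P0 : P (fun x => exists r, x = r * u).
  split; first split.
  - by exists 0; rewrite mul0r.
  - by move=> x y [a ->] [b ->]; exists (a + b); rewrite mulrDl.
  - by move=> r x [a ->]; exists (r * a); rewrite mulrA.
  split; first by exists 1; rewrite mul1r.
  by move=> [r Hr]; apply: Hu; exists r.
pose t0 : T := exist _ _ P0.
pose rl : rel T := fun s t => `[< forall x, proj1_sig s x -> proj1_sig t x >].
have [t Ht] : exists t, premaximal rl t.
  apply: (@ZL_preorder T t0 rl).
- by move=> s; apply/asboolP.
- by move=> a b c /asboolP H1 /asboolP H2; apply/asboolP => x /H1 /H2.
- move=> A Atot.
  case: (classic (exists s, A s)) => [[s0 As0]|NA]; last first.
    by exists t0 => s As; exfalso; apply: NA; exists s.
  pose U x := exists s, A s /\ proj1_sig s x.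
  have PU : P U.
    split; first split.
    - by exists s0; split => //; case: (proj2_sig s0) => [[]].
    - move=> x y [s [As sx]] [s' [As' s'y]].
      have [/asboolP H|/asboolP H] := Atot s s' As As'.
      + exists s'; split => //; case: (proj2_sig s') => [[_ Hadd _] _].
        by apply: Hadd => //; apply: H.
      + exists s; split => //; case: (proj2_sig s) => [[_ Hadd _] _].
        by apply: Hadd => //; apply: H.
    - move=> r x [s [As sx]]; exists s; split => //.
      by case: (proj2_sig s) => [[_ _ Hm] _]; apply: Hm.
    split; first by exists s0; split => //; case: (proj2_sig s0) => [_ []].
    move=> [s [As s1]]; by case: (proj2_sig s) => [_ [_ H]].
  exists (exist _ U PU) => s As; apply/asboolP => x sx /=.
  by exists s.
case: t Ht => L [HL [Lu L1]] Ht.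
exists L; split => //; split => //; first by exists 1.
move=> I HI LI.
case: (classic (I 1)) => I1.
  by right => x; case: HI => _ _ Hm; rewrite -(mulr1 x); apply: Hm.
left.
have PI : P I by split => //; split => //; apply: LI.
have := Ht (exist _ I PI); rewrite /rl /=.
move=> H x Ix.
have H2 : `[< forall x : R, L x -> I x >] by apply/asboolP.
by move: (H H2) => /asboolP; apply.
Qed.

Lemma li_opp (I : R -> Prop) (x : R) : is_left_ideal I -> I x -> I (- x).
Proof. by case=> _ _ Hm Hx; rewrite -mulN1r; apply: Hm. Qed.

Lemma ri_opp (I : R -> Prop) (x : R) : is_right_ideal I -> I x -> I (- x).
Proof. by case=> _ _ Hm Hx; rewrite -mulrN1; apply: Hm. Qed.

Lemma jac_linv (z : R) : jacobson z -> exists w, w * (1 - z) = 1.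
Proof.
move=> Jz; apply: NNPP => H.
have [L [HL L1z]] := max_left_exists H.
have Lz := Jz L HL.
case: HL => [[L0 Ladd Lm] [x Lx] _].
have L1 : L 1 by rewrite -(subrK z 1); apply: Ladd.
by apply: Lx; rewrite -(mulr1 x); apply: Lm.
Qed.

Lemma jac_lmul (r z : R) : jacobson z -> jacobson (r * z).
Proof. by move=> Jz M HM; case: (HM) => [[_ _ Hm] _ _]; apply: Hm; apply: Jz. Qed.

Lemma jac_rinv (z : R) : jacobson z -> exists w, (1 - z) * w = 1.
Proof.
move=> Jz; have [w Hw] := jac_linv Jz.
have ew : w = 1 + w * z by rewrite -Hw mulrBr mulr1 subrK.
have [v Hv] := jac_linv (jac_lmul (- w) Jz).
have vw : v * w = 1 by rewrite mulNr opprK -ew in Hv.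
exists w; have : v = 1 - z.
  by transitivity (v * (w * (1 - z))); [rewrite Hw mulr1|rewrite mulrA vw mul1r].
by move=> <-.
Qed.

Lemma jac_maxright (M : R -> Prop) (y : R) : is_maximal_right_ideal M -> jacobson y -> M y.
Proof.
move=> [[M0 Madd Mm] [x0 Mx0] Mmax] Jy; apply: NNPP => My.
pose K x := exists s m, M m /\ x = y * s + m.
have HK : is_right_ideal K.
  split.
  - by exists 0, 0; rewrite mulr0 addr0.
  - move=> a b [s [m [Mm1 ->]]] [s' [m' [Mm' ->]]].
    exists (s + s'), (m + m'); split; first exact: Madd.
    by rewrite mulrDr addrACA.
  - move=> r a [s [m [Mm1 ->]]]; exists (s * r), (m * r); split; first exact: Mm.
    by rewrite mulrDl mulrA.
have [H|H] : (forall x, K x -> M x) \/ (forall x, K x).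
  by apply: Mmax => // m Mm1; exists 0, m; rewrite mulr0 add0r.
  by apply: My; apply: H; exists 1, 0; rewrite mulr1 addr0.
have [s [m [Mm1 e1]]] := H 1.
have [w Hw] := jac_linv (jac_lmul s Jy).
have [w' Hw'] := jac_rinv (jac_lmul s Jy).
have em : m = 1 - y * s by rewrite e1 addrC addKr.
have : M (m * (1 + y * w' * s)) by apply: Mm.
have -> : m * (1 + y * w' * s) = 1.
  have key : y * ((1 - s * y) * w') * s = y * w' * s - y * s * (y * w' * s).
    by rewrite mulrBl mul1r mulrBr mulrBl !mulrA.
  rewrite Hw' mulr1 in key.
  rewrite em mulrBl mul1r mulrDr mulr1 opprD -addrA [y * w' * s + _]addrCA -key.
  by rewrite addNr addr0.
move=> M1; apply: Mx0; rewrite -(mul1r x0); exact: Mm.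
Qed.

Lemma left_part : NJ_symmetric R -> MELT R -> left_quasi_duo R.
Proof.
move=> NJ ME M HM.
case: (classic (is_essential_left_ideal M)) => Hess; first exact: ME.
have HM' := HM; case: HM' => [HL [x0 Mx0] Mmax].
have HL' := HL; case: HL' => M0 Madd Mm.
have [I [HI [[a [Ia a0]] IM]]] : exists I : R -> Prop, is_left_ideal I /\ (exists x, I x /\ x <> 0) /\ (forall y, I y -> M y -> y = 0).
  apply: NNPP => H; apply: Hess; split; first by split.
  move=> I HI Inz; apply: NNPP => H2; apply: H; exists I; split => //; split => //.
  move=> y Iy My; apply: NNPP => y0; apply: H2; exists y; split => //.
case: (HI) => [I0 Iadd Im].
pose K x := exists m b, M m /\ I b /\ x = m + b.
have HK : is_left_ideal K.
  split.
  - by exists 0, 0; rewrite addr0.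
  - move=> x y [m [b [Mm1 [Ib ->]]]] [m' [b' [Mm' [Ib' ->]]]].
    by exists (m + m'), (b + b'); do !split; [apply: Madd|apply: Iadd|rewrite addrACA].
  - move=> r x [m [b [Mm1 [Ib ->]]]].
    by exists (r * m), (r * b); do !split; [apply: Mm|apply: Im|rewrite mulrDr].
have [H|H] : (forall x, K x -> M x) \/ (forall x, K x).
  by apply: Mmax => // m Mm1; exists m, 0; rewrite addr0.
  by exfalso; apply: a0; apply: IM => //; apply: H; exists 0, a; rewrite add0r.
have [m [e [Mm1 [Ie e1]]]] := H 1.
have em0 : e * m = 0.
  apply: IM; last by apply: Mm.
  have -> : e * m = e - e * e by rewrite -{2}(mulr1 e) e1 mulrDr addrK.
  by apply: Iadd => //; apply: (li_opp HI); apply: Im.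
have me0 : m * e = 0.
  have mE : m = 1 - e by rewrite e1 addrK.
  by move: em0; rewrite mE mulrBl mulrBr mul1r mulr1.
split; first by split.
split => // r x Mx.
have xe0 : x * e = 0.
  apply: IM; first by apply: Im.
  have -> : x * e = x - x * m by apply/eqP; rewrite eq_sym subr_eq addrC -mulrDr -e1 mulr1.
  by apply: Madd => //; apply: (li_opp HL); apply: Mm.
have xm : x = x * m by rewrite -{1}(mulr1 x) e1 mulrDr xe0 addr0.
have -> : x * r = x * r * m + x * (m * r * e).
  by rewrite !mulrA -xm -mulrDr -e1 mulr1.
apply: Madd; first by apply: Mm.
apply: Mm; apply: (NJ r m e); last exact: HM.
by exists 1%N; rewrite expr1 -mulrA me0 mulr0.
Qed.

Lemma right_part : NJ_symmetric R -> MERT R -> right_quasi_duo R.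
Proof.
move=> NJ ME M HM.
case: (classic (is_essential_right_ideal M)) => Hess; first exact: ME.
have HM' := HM; case: HM' => [HL [x0 Mx0] Mmax].
have HL' := HL; case: HL' => M0 Madd Mm.
have [I [HI [[a [Ia a0]] IM]]] : exists I : R -> Prop, is_right_ideal I /\ (exists x, I x /\ x <> 0) /\ (forall y, I y -> M y -> y = 0).
  apply: NNPP => H; apply: Hess; split; first by split.
  move=> I HI Inz; apply: NNPP => H2; apply: H; exists I; split => //; split => //.
  move=> y Iy My; apply: NNPP => y0; apply: H2; exists y; split => //.
case: (HI) => [I0 Iadd Im].
pose K x := exists m b, M m /\ I b /\ x = m + b.
have HK : is_right_ideal K.
  split.
  - by exists 0, 0; rewrite addr0.
  - move=> x y [m [b [Mm1 [Ib ->]]]] [m' [b' [Mm' [Ib' ->]]]].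
    by exists (m + m'), (b + b'); do !split; [apply: Madd|apply: Iadd|rewrite addrACA].
  - move=> r x [m [b [Mm1 [Ib ->]]]].
    by exists (m * r), (b * r); do !split; [apply: Mm|apply: Im|rewrite mulrDl].
have [H|H] : (forall x, K x -> M x) \/ (forall x, K x).
  by apply: Mmax => // m Mm1; exists m, 0; rewrite addr0.
  by exfalso; apply: a0; apply: IM => //; apply: H; exists 0, a; rewrite add0r.
have [m [e [Mm1 [Ie e1]]]] := H 1.
have mE : m = 1 - e by rewrite e1 addrK.
have me0 : m * e = 0.
  apply: IM; last by apply: Mm.
  rewrite mE mulrBl mul1r.
  by apply: Iadd => //; apply: (ri_opp HI); apply: Im.
have em0 : e * m = 0.
  by move: me0; rewrite mE mulrBl mulrBr mul1r mulr1.
split; last by split.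
split => // r x Mx.
have ex0 : e * x = 0.
  apply: IM; first by apply: Im.
  have -> : e * x = x - m * x by apply/eqP; rewrite eq_sym subr_eq addrC -mulrDl -e1 mul1r.
  by apply: Madd => //; apply: (ri_opp HL); apply: Mm.
have xm : x = m * x by rewrite -{1}(mul1r x) e1 mulrDl ex0 addr0.
have -> : r * x = m * (r * x) + (e * r * m) * x.
  by rewrite -!mulrA -xm -mulrDl -e1 mul1r.
apply: Madd; first by apply: Mm.
apply: Mm; apply: (jac_maxright HM); apply: (NJ r e m).
by exists 1%N; rewrite expr1 -mulrA em0 mulr0.
Qed.
End S.

Theorem theorem2p8 (R : pzRingType) :
  NJ_symmetric R ->
  (MELT R -> left_quasi_duo R) /\ (MERT R -> right_quasi_duo R).
Proof. by move=> NJ; split; [apply: left_part|apply: right_part]. Qed.
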